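(* Let $k>0$ be sufficiently large and let $f_k$ be the standard map. For $z\in\mathbb T^2$ let $e^{(1)}(z)$ be the most contracted direction of $Df_k(z)$ and $e^{(-1)}(z)$ the most contracted direction of $D(f_k^{-1})(z)$. Then there is no point $z=(x,y)$ with $y\in[0,\delta^-]\cup[1-\delta^-,1]$ at which $e^{(1)}(z)$ and $e^{(-1)}(z)$ span the same line (i.e. there are no tangencies between the foliations $\mathcal E^{(1)}$ and $\mathcal E^{(-1)}$ in this region).
   Context: The standard map is $f_k(x,y)=(x+k\sin(2\pi y),\,x+y+k\sin(2\pi y))\bmod 1$ on $\mathbb T^2=\mathbb R^2/\mathbb Z^2$. For an invertible linear map $A$ with $\min_{\|v\|=1}\|Av\|<\max_{\|v\|=1}\|Av\|$, its most contracted direction is the line spanned by a unit vector minimizing $\|Av\|$; $\mathcal E^{(\pm1)}$ denote the foliations tangent to $e^{(\pm1)}$. $\delta^-=\frac1{2\pi}\cos^{-1}\!\left(\frac{\sqrt3-1}{4\pi k}\right)$ with $\cos^{-1}\in[0,\pi]$. *)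

(* Defs.v *)
From Stdlib Require Import Reals Lra.
Open Scope R_scope.

(** Vectors of R^2 and 2x2 real matrices (row-major: (a, b, c, d) = [[a,b],[c,d]]). *)
Definition vec2 := (R * R)%type.
Definition mat2 := (R * R * R * R)%type.

Definition mat_apply (A : mat2) (v : vec2) : vec2 :=
  let '(a, b, c, d) := A in (a * fst v + b * snd v, c * fst v + d * snd v).

Definition norm2 (v : vec2) : R := sqrt (fst v * fst v + snd v * snd v).

Definition most_contracted (A : mat2) (v : vec2) : Prop :=
  norm2 v = 1 /\ forall w : vec2, norm2 w = 1 -> norm2 (mat_apply A v) <= norm2 (mat_apply A w).

(** Two nonzero vectors of R^2 span the same line iff their determinant vanishes. *)
Definition same_line (v w : vec2) : Prop := fst v * snd w - snd v * fst w = 0.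

(** Lift of the standard map f_k to R^2 (f_k on T^2 is this map mod Z^2). *)
Definition std_map (k : R) (z : vec2) : vec2 :=
  let '(x, y) := z in
  (x + k * sin (2 * PI * y), x + y + k * sin (2 * PI * y)).

Definition std_map_inv (k : R) (z : vec2) : vec2 :=
  let '(x, y) := z in
  (x - k * sin (2 * PI * (y - x)), y - x).

Lemma std_map_inv_l k z : std_map_inv k (std_map k z) = z.
Proof.
  destruct z as [x y]; unfold std_map, std_map_inv; f_equal;
  replace (x + y + k * sin (2 * PI * y) - (x + k * sin (2 * PI * y))) with y by ring; ring.
Qed.

Lemma std_map_inv_r k z : std_map k (std_map_inv k z) = z.
Proof.
  destruct z as [x y]; unfold std_map, std_map_inv; f_equal;
  replace (x - k * sin (2 * PI * (y - x)) + (y - x)) with (y - k * sin (2 * PI * (y - x))) by ring;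
  ring.
Qed.

Definition Df (k : R) (z : vec2) : mat2 :=
  let '(x, y) := z in
  let c := 2 * PI * k * cos (2 * PI * y) in
  (1, c, 1, 1 + c).

Definition Dfinv (k : R) (z : vec2) : mat2 :=
  let '(x, y) := z in
  let c := 2 * PI * k * cos (2 * PI * (y - x)) in
  (1 + c, - c, -1, 1).

Lemma Df_entries k x y :
  derivable_pt_lim (fun t => fst (std_map k (t, y))) x 1 /\
  derivable_pt_lim (fun t => fst (std_map k (x, t))) y (2 * PI * k * cos (2 * PI * y)) /\
  derivable_pt_lim (fun t => snd (std_map k (t, y))) x 1 /\
  derivable_pt_lim (fun t => snd (std_map k (x, t))) y (1 + 2 * PI * k * cos (2 * PI * y)).
Proof.
  simpl. repeat split.
  - replace 1 with (1 + 0) by ring. apply derivable_pt_lim_plus;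
      [apply derivable_pt_lim_id | apply derivable_pt_lim_const].
  - replace (2 * PI * k * cos (2 * PI * y)) with (0 + k * (cos (2 * PI * y) * (2 * PI * 1))) by ring.
    apply derivable_pt_lim_plus; [apply derivable_pt_lim_const|].
    apply derivable_pt_lim_scal.
    apply (derivable_pt_lim_comp (fun t => 2 * PI * t) sin).
    + apply derivable_pt_lim_scal, derivable_pt_lim_id.
    + apply derivable_pt_lim_sin.
  - replace 1 with (1 + 0 + 0) by ring. apply derivable_pt_lim_plus; [apply derivable_pt_lim_plus|];
      [apply derivable_pt_lim_id | apply derivable_pt_lim_const | apply derivable_pt_lim_const].
  - replace (1 + 2 * PI * k * cos (2 * PI * y)) with (0 + 1 + k * (cos (2 * PI * y) * (2 * PI * 1))) by ring.
    apply derivable_pt_lim_plus; [apply derivable_pt_lim_plus|];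
      [apply derivable_pt_lim_const | apply derivable_pt_lim_id|].
    apply derivable_pt_lim_scal.
    apply (derivable_pt_lim_comp (fun t => 2 * PI * t) sin).
    + apply derivable_pt_lim_scal, derivable_pt_lim_id.
    + apply derivable_pt_lim_sin.
Qed.

Lemma Dfinv_entries k x y :
  derivable_pt_lim (fun t => fst (std_map_inv k (t, y))) x (1 + 2 * PI * k * cos (2 * PI * (y - x))) /\
  derivable_pt_lim (fun t => fst (std_map_inv k (x, t))) y (- (2 * PI * k * cos (2 * PI * (y - x)))) /\
  derivable_pt_lim (fun t => snd (std_map_inv k (t, y))) x (-1) /\
  derivable_pt_lim (fun t => snd (std_map_inv k (x, t))) y 1.
Proof.
  simpl. repeat split.
  - replace (1 + 2 * PI * k * cos (2 * PI * (y - x)))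
      with (1 - k * (cos (2 * PI * (y - x)) * (2 * PI * (0 - 1)))) by ring.
    apply derivable_pt_lim_minus; [apply derivable_pt_lim_id|].
    apply derivable_pt_lim_scal.
    apply (derivable_pt_lim_comp (fun t => 2 * PI * (y - t)) sin).
    + apply derivable_pt_lim_scal, derivable_pt_lim_minus;
        [apply derivable_pt_lim_const | apply derivable_pt_lim_id].
    + apply derivable_pt_lim_sin.
  - replace (- (2 * PI * k * cos (2 * PI * (y - x))))
      with (0 - k * (cos (2 * PI * (y - x)) * (2 * PI * (1 - 0)))) by ring.
    apply derivable_pt_lim_minus; [apply derivable_pt_lim_const|].
    apply derivable_pt_lim_scal.
    apply (derivable_pt_lim_comp (fun t => 2 * PI * (t - x)) sin).
    + apply derivable_pt_lim_scal, derivable_pt_lim_minus;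
        [apply derivable_pt_lim_id | apply derivable_pt_lim_const].
    + apply derivable_pt_lim_sin.
  - replace (-1) with (0 - 1) by ring. apply derivable_pt_lim_minus;
      [apply derivable_pt_lim_const | apply derivable_pt_lim_id].
  - replace 1 with (1 - 0) by ring. apply derivable_pt_lim_minus;
      [apply derivable_pt_lim_id | apply derivable_pt_lim_const].
Qed.

Definition delta_minus (k : R) : R :=
  / (2 * PI) * acos ((sqrt 3 - 1) / (4 * PI * k)).

(* Main.v *)
Require Import Defs.
From Stdlib Require Import Reals Lra Psatz.
Open Scope R_scope.

Definition Qf (A : mat2) (v : vec2) : R :=
  fst (mat_apply A v) * fst (mat_apply A v) + snd (mat_apply A v) * snd (mat_apply A v).

Lemma norm2_mat A v : norm2 (mat_apply A v) = sqrt (Qf A v).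
Proof. reflexivity. Qed.

Lemma Qf_scale A a b n : n <> 0 -> Qf A (a / n, b / n) = Qf A (a, b) / (n * n).
Proof.
  intro Hn. destruct A as [[[p q] r] s]. unfold Qf, mat_apply; simpl. field. auto.
Qed.

Lemma witness A v a b : most_contracted A v -> 0 < a * a + b * b ->
  Qf A v * (a * a + b * b) <= Qf A (a, b).
Proof.
  intros [Hv Hmin] Hpos.
  set (n := sqrt (a * a + b * b)).
  assert (Hn : 0 < n) by (apply sqrt_lt_R0; lra).
  assert (Hnn : n * n = a * a + b * b) by (apply sqrt_sqrt; lra).
  assert (Hw : norm2 (a / n, b / n) = 1).
  { unfold norm2; simpl.
    replace (a / n * (a / n) + b / n * (b / n)) with 1. apply sqrt_1.
    field_simplify_eq; [lra | lra]. }
  specialize (Hmin _ Hw). rewrite !norm2_mat in Hmin.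
  rewrite Qf_scale in Hmin by lra.
  assert (H0v : 0 <= Qf A v) by (unfold Qf; nra).
  assert (H0w : 0 <= Qf A (a, b)) by (unfold Qf; nra).
  destruct (Rle_or_lt (Qf A v * (a * a + b * b)) (Qf A (a, b))) as [H|H]; auto.
  exfalso.
  assert (Qf A (a, b) / (n * n) < Qf A v).
  { rewrite Hnn. apply (Rmult_lt_reg_r (a*a+b*b)); [lra|].
    field_simplify; lra. }
  assert (sqrt (Qf A (a, b) / (n * n)) < sqrt (Qf A v)).
  { apply sqrt_lt_1; auto. unfold Rdiv; apply Rmult_le_pos; [nra|]; left; apply Rinv_0_lt_compat; nra. }
  lra.
Qed.

Lemma unit_sq v : norm2 v = 1 -> fst v * fst v + snd v * snd v = 1.
Proof.
  unfold norm2; intro H.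
  assert (0 <= fst v * fst v + snd v * snd v) by nra.
  rewrite <- (sqrt_sqrt _ H0), H. ring.
Qed.

Lemma L1 p q r s v : most_contracted (p, q, r, s) v ->
  (p * q + r * s) * fst v * snd v <= 0.
Proof.
  intro H. pose proof (unit_sq _ (proj1 H)) as Hu.
  pose proof (witness _ _ (fst v) (- snd v) H ltac:(lra)) as W.
  unfold Qf, mat_apply in W; simpl in W. nra.
Qed.

Lemma L2 p q r s v : most_contracted (p, q, r, s) v -> p * q + r * s <> 0 ->
  fst v * snd v <> 0.
Proof.
  intros H Hq. pose proof (unit_sq _ (proj1 H)) as Hu.
  set (P := p * p + r * r). set (S := q * q + s * s). set (c := p * q + r * s).
  set (t := / (Rabs (S - P) + 1)).
  assert (Ht : 0 < t) by (unfold t; apply Rinv_0_lt_compat; pose proof (Rabs_pos (S-P)); lra).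
  assert (Ht1 : Rabs (S - P) * t < 1).
  { unfold t. pose proof (Rabs_pos (S-P)).
    apply (Rmult_lt_reg_r (Rabs (S - P) + 1)); [lra|].
    field_simplify; lra. }
  assert (Hab : S - P <= Rabs (S - P)) by apply Rle_abs.
  assert (Hab' : P - S <= Rabs (S - P)) by (rewrite Rabs_minus_sym; apply Rle_abs).
  assert (Hc2 : 0 < c * c) by (apply Rsqr_pos_lt; exact Hq).
  intro H0. destruct (Rmult_integral _ _ H0) as [E|E].
  - pose proof (witness _ _ (- c * t) 1 H ltac:(nra)) as W.
    unfold Qf, mat_apply in W; simpl in W. rewrite E in W, Hu.
    assert (Hs : snd v * snd v = 1) by lra.
    assert (W2 : S * (c*c*t*t + 1) <= P * (c*c*t*t) - 2*c*c*t + S).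
    { assert (E1 : (p * 0 + q * snd v) * (p * 0 + q * snd v) + (r * 0 + s * snd v) * (r * 0 + s * snd v) = S * (snd v * snd v)) by (unfold S; ring).
      rewrite Hs, Rmult_1_r in E1. rewrite E1 in W.
      assert (E2 : P * (c*c*t*t) - 2*c*c*t + S = (p * (- c * t) + q * 1) * (p * (- c * t) + q * 1) + (r * (- c * t) + s * 1) * (r * (- c * t) + s * 1)) by (unfold S, P, c; ring).
      assert (E3 : S * (c*c*t*t + 1) = S * (- c * t * (- c * t) + 1 * 1)) by ring.
      lra. }
    assert ((P - S) * (c*c*t*t) <= Rabs (S-P) * t * (c*c*t)).
    { replace (Rabs (S-P) * t * (c*c*t)) with (Rabs (S-P) * (c*c*t*t)) by ring.
      apply Rmult_le_compat_r; nra. }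
    assert (Rabs (S-P) * t * (c*c*t) < c*c*t).
    { pattern (c*c*t) at 2; rewrite <- (Rmult_1_l (c*c*t)). apply Rmult_lt_compat_r; nra. }
    nra.
  - pose proof (witness _ _ 1 (- c * t) H ltac:(nra)) as W.
    unfold Qf, mat_apply in W; simpl in W. rewrite E in W, Hu.
    assert (Hs : fst v * fst v = 1) by lra.
    assert (W2 : P * (1 + c*c*t*t) <= P - 2*c*c*t + S * (c*c*t*t)).
    { assert (E1 : (p * fst v + q * 0) * (p * fst v + q * 0) + (r * fst v + s * 0) * (r * fst v + s * 0) = P * (fst v * fst v)) by (unfold P; ring).
      rewrite Hs, Rmult_1_r in E1. rewrite E1 in W.
      assert (E2 : P - 2*c*c*t + S * (c*c*t*t) = (p * 1 + q * (- c * t)) * (p * 1 + q * (- c * t)) + (r * 1 + s * (- c * t)) * (r * 1 + s * (- c * t))) by (unfold S, P, c; ring).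
      assert (E3 : P * (1 + c*c*t*t) = P * (1 * 1 + - c * t * (- c * t))) by ring.
      lra. }
    assert ((S - P) * (c*c*t*t) <= Rabs (S-P) * t * (c*c*t)).
    { replace (Rabs (S-P) * t * (c*c*t)) with (Rabs (S-P) * (c*c*t*t)) by ring.
      apply Rmult_le_compat_r; nra. }
    assert (Rabs (S-P) * t * (c*c*t) < c*c*t).
    { pattern (c*c*t) at 2; rewrite <- (Rmult_1_l (c*c*t)). apply Rmult_lt_compat_r; nra. }
    nra.
Qed.

Lemma key c d v w : c > -1/2 ->
  most_contracted (1, c, 1, 1 + c) v ->
  most_contracted (1 + d, - d, -1, 1) w -> ~ same_line v w.
Proof.
  intros Hc Hv Hw Hs. unfold same_line in Hs.
  pose proof (L1 _ _ _ _ _ Hv) as A1. pose proof (L1 _ _ _ _ _ Hw) as B1.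
  assert (qa : 1 * c + 1 * (1 + c) > 0) by lra.
  assert (qb : (1 + d) * - d + -1 * 1 < 0) by nra.
  pose proof (L2 _ _ _ _ _ Hv ltac:(lra)) as A2.
  pose proof (L2 _ _ _ _ _ Hw ltac:(lra)) as B2.
  assert (fst v * snd v < 0).
  { destruct (Rle_or_lt 0 (fst v * snd v)); [|lra].
    assert (fst v * snd v > 0) by lra. nra. }
  assert (fst w * snd w > 0).
  { destruct (Rle_or_lt (fst w * snd w) 0); [|lra].
    assert (fst w * snd w < 0) by lra. nra. }
  assert (fst v * snd w = snd v * fst w) by lra.
  assert ((fst v * snd v) * (fst w * snd w) = (fst v * snd w) * (fst v * snd w)) by nra.
  nra.
Qed.

Theorem mainTheorem7 :
  exists k0 : R, forall k : R, k0 < k ->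
    forall x y : R, 0 <= x < 1 ->
      ((0 <= y <= delta_minus k) \/ (1 - delta_minus k <= y <= 1)) ->
      forall v w : vec2,
        most_contracted (Df k (x, y)) v ->
        most_contracted (Dfinv k (x, y)) w ->
        ~ same_line v w.
Proof.
  exists 0. intros k Hk x y Hx Hy v w Hv Hw.
  simpl in Hv, Hw.
  refine (key _ (2 * PI * k * cos (2 * PI * (y - x))) v w _ Hv Hw).
  assert (Hpi := PI_RGT_0).
  assert (Hs3 : 1 < sqrt 3).
  { rewrite <- sqrt_1. apply sqrt_lt_1; lra. }
  assert (Hu : 0 < (sqrt 3 - 1) / (4 * PI * k)).
  { apply Rdiv_lt_0_compat; [lra|]. nra. }
  assert (Ha : acos ((sqrt 3 - 1) / (4 * PI * k)) <= PI / 2).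
  { rewrite acos_atan by exact Hu. pose proof (atan_bound (sqrt (1 - ((sqrt 3 - 1) / (4 * PI * k))²) / ((sqrt 3 - 1) / (4 * PI * k)))). lra. }
  assert (Ha0 := acos_bound ((sqrt 3 - 1) / (4 * PI * k))).
  assert (Hd : delta_minus k <= 1/4).
  { unfold delta_minus. apply (Rmult_le_reg_l (2 * PI)); [lra|].
    field_simplify; lra. }
  assert (Hd0 : 0 <= delta_minus k).
  { unfold delta_minus. apply Rmult_le_pos; [|lra].
    left; apply Rinv_0_lt_compat; lra. }
  assert (Hcos : 0 <= cos (2 * PI * y)).
  { destruct Hy as [Hy|Hy].
    - apply cos_ge_0; nra.
    - replace (2 * PI * y) with ((2 * PI * y - 2 * PI) + 2 * INR 1 * PI)
        by (simpl; ring).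
      rewrite cos_period. apply cos_ge_0; nra. }
  assert (0 <= 2 * PI * k * cos (2 * PI * y)).
  { apply Rmult_le_pos; [nra | exact Hcos]. }
  lra.
Qed.
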